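(* For almost all $n$-variable Boolean functions $f$ it holds that $NN(f)>\frac{2^{n/2}}{n}$; that is, the fraction of Boolean functions $f:\{0,1\}^n\to\{0,1\}$ satisfying $NN(f)>2^{n/2}/n$ tends to $1$ as $n\to\infty$.
   Context: For a Boolean function $f:\{0,1\}^n\to\{0,1\}$, a nearest neighbor representation is a pair of disjoint sets $(P,N)$ of points of $\mathbb R^n$ such that for every $a\in\{0,1\}^n$: if $f(a)=1$, there is $b\in P$ with $d(a,b)<d(a,c)$ for all $c\in N$; if $f(a)=0$, there is $b\in N$ with $d(a,b)<d(a,c)$ for all $c\in P$ ($d$ = Euclidean distance). $NN(f)$ is the minimum of $|P\cup N|$ over all nearest neighbor representations of $f$. *)

(* Defs.v *)
From HB Require Import structures.
From mathcomp Require Import all_boot all_order all_algebra.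
From mathcomp Require Import boolp classical_sets reals Rstruct Rstruct_topology topology normedtype sequences.
Set Implicit Arguments. Unset Strict Implicit. Unset Printing Implicit Defensive.
Import Order.TTheory GRing.Theory Num.Theory.
Local Open Scope ring_scope.

Notation R := Rdefinitions.R.

Definition cube (n : nat) := {ffun 'I_n -> bool}.
Definition boolfun (n : nat) := {ffun cube n -> bool}.

Definition emb n (a : cube n) : 'rV[R]_n := \row_i ((a i : nat)%:R).

Definition dist n (x y : 'rV[R]_n) : R :=
  Num.sqrt (\sum_(i < n) (x ord0 i - y ord0 i) ^+ 2).

Definition NN_rep n (f : boolfun n) (P N : seq 'rV[R]_n) : Prop :=
  (forall x, x \in P -> x \notin N) /\
  (forall a : cube n,
     (f a -> exists2 b, b \in P & forall c, c \in N -> dist (emb a) b < dist (emb a) c) /\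
     (~~ f a -> exists2 b, b \in N & forall c, c \in P -> dist (emb a) b < dist (emb a) c)).

Definition rep_size n (P N : seq 'rV[R]_n) : nat := size (undup (P ++ N)).

Definition has_rep_of_size n (f : boolfun n) (m : nat) : bool :=
  `[< exists P N, NN_rep f P N /\ rep_size P N = m >].

Lemma emb_inj n : injective (@emb n).
Proof.
move=> a b /matrixP H; apply/ffunP => i; have := H ord0 i; rewrite !mxE.
by case: (a i); case: (b i) => //= /eqP; rewrite ?oner_eq0 // eq_sym oner_eq0.
Qed.

Lemma dist_self n (x : 'rV[R]_n) : dist x x = 0.
Proof. by rewrite /dist big1 ?sqrtr0 // => i _; rewrite subrr expr0n. Qed.

Lemma dist_gt0 n (x y : 'rV[R]_n) : x != y -> 0 < dist x y.
Proof.
move=> nxy; rewrite /dist sqrtr_gt0.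
have [i Hi] : exists i, x ord0 i != y ord0 i.
  apply/existsP; apply: contraR nxy => /existsPn H; apply/eqP/matrixP => r j.
  by rewrite (ord1 r); apply/eqP; have := H j; rewrite negbK.
rewrite (bigD1 i) //= ltr_pwDl //.
  by rewrite lt_neqAle sqr_ge0 andbT eq_sym sqrf_eq0 subr_eq0 Hi.
by apply: sumr_ge0 => j _; rewrite sqr_ge0.
Qed.

Lemma NN_exists n (f : boolfun n) : exists m, has_rep_of_size f m.
Proof.
set P := [seq emb a | a <- enum (cube n) & f a].
set N := [seq emb a | a <- enum (cube n) & ~~ f a].
exists (rep_size P N); apply/asboolP; exists P, N; split=> //; split.
  move=> x /mapP [a]; rewrite mem_filter => /andP [fa _] ->.
  apply/mapP => -[b]; rewrite mem_filter => /andP [nfb _] /emb_inj eab.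
  by move: nfb; rewrite -eab fa.
move=> a; split=> Ha.
  exists (emb a); first by apply/mapP; exists a; rewrite // mem_filter Ha mem_enum.
  move=> c /mapP [b]; rewrite mem_filter => /andP [nfb _] ->.
  rewrite dist_self dist_gt0 //; apply/eqP => /emb_inj eab.
  by move: nfb; rewrite -eab Ha.
exists (emb a); first by apply/mapP; exists a; rewrite // mem_filter Ha mem_enum.
move=> c /mapP [b]; rewrite mem_filter => /andP [fb _] ->.
rewrite dist_self dist_gt0 //; apply/eqP => /emb_inj eab.
by move: Ha; rewrite eab fb.
Qed.

Definition NN n (f : boolfun n) : nat := ex_minn (NN_exists f).

(* Main.v *)
Require Import Defs.
From HB Require Import structures.
From mathcomp Require Import all_boot all_order all_algebra.
From mathcomp Require Import boolp classical_sets reals Rstruct Rstruct_topology topology normedtype sequences.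
From mathcomp Require Import zify ring lra.
Import Order.TTheory GRing.Theory Num.Theory.
Set Implicit Arguments. Unset Strict Implicit. Unset Printing Implicit Defensive.

Local Open Scope ring_scope.

Definition thr n (b c : 'rV[R]_n) : boolfun n :=
  [ffun a => dist (emb a) b < dist (emb a) c].

Definition Lf n (b c : 'rV[R]_n) (a : cube n) : R :=
  \sum_(i < n) (c ord0 i ^+ 2 - b ord0 i ^+ 2)
  + \sum_(i < n) ((a i : nat)%:R * (2 * (b ord0 i - c ord0 i))).

Lemma sqrt_lt (x y : R) : 0 <= x -> 0 <= y -> (Num.sqrt x < Num.sqrt y) = (x < y).
Proof.
move=> hx hy; have [y0|yp] := eqVneq y 0.
  by rewrite y0 sqrtr0 !ltNge sqrtr_ge0 hx.
by rewrite ltr_sqrt // lt_neqAle eq_sym yp hy.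
Qed.

Lemma thrE n (b c : 'rV[R]_n) a : thr b c a = (0 < Lf b c a).
Proof.
rewrite ffunE /dist sqrt_lt; last 2 first.
- by apply: sumr_ge0 => i _; rewrite sqr_ge0.
- by apply: sumr_ge0 => i _; rewrite sqr_ge0.
rewrite -subr_gt0 /Lf -sumrB -big_split /=.
congr (0 < _); apply: eq_bigr => i _; rewrite !mxE; ring.
Qed.


Local Open Scope ring_scope.

Lemma sum_bool_card (T : finType) (g : pred T) :
  \sum_(a : T) ((g a : nat)%:R : R) = #|[pred a | g a]|%:R.
Proof.
rewrite -natr_sum; congr (_%:R).
rewrite -sum1_card [RHS]big_mkcond /=; apply: eq_bigr => a _; rewrite inE.
by case: (g a).
Qed.

Lemma thr_incl n (b c : 'rV[R]_n) (g : boolfun n) :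
  #|[pred a | thr b c a]| = #|[pred a | g a]| ->
  (forall i, #|[pred a | thr b c a && a i]| = #|[pred a | g a && a i]|) ->
  forall a, thr b c a -> g a.
Proof.
move=> H0 Hi.
set h := fun a : cube n => ((thr b c a : nat)%:R - (g a : nat)%:R : R).
have S0 : \sum_(a : cube n) h a * Lf b c a = 0.
  set K := \sum_(i < n) (c ord0 i ^+ 2 - b ord0 i ^+ 2).
  set w := fun i : 'I_n => 2 * (b ord0 i - c ord0 i).
  have E : forall a, h a * Lf b c a =
     h a * K + \sum_(i < n) (h a * (a i : nat)%:R) * w i.
    move=> a; rewrite /Lf mulrDr; congr (_ + _); rewrite mulr_sumr.
    by apply: eq_bigr => i _; rewrite mulrA.
  rewrite (eq_bigr _ (fun a _ => E a)).
  rewrite big_split /= -mulr_suml exchange_big /=.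
  rewrite /h sumrB !sum_bool_card H0 subrr mul0r add0r.
  apply: big1 => i _; rewrite -mulr_suml.
  under eq_bigr => a _ do rewrite mulrBl -!natrM !mulnb.
  by rewrite sumrB (sum_bool_card (fun a => thr b c a && a i))
     (sum_bool_card (fun a => g a && a i)) Hi subrr mul0r.
have ge0 : forall a : cube n, true -> 0 <= h a * Lf b c a.
  move=> a _; rewrite /h.
  have := thrE b c a; case: (thr b c a) => /=; case: (g a) => //= HL.
  - by rewrite subrr mul0r.
  - by rewrite subr0 mul1r; apply: ltW; rewrite -HL.
  - rewrite sub0r mulN1r oppr_ge0; rewrite leNgt -HL //.
  - by rewrite subrr mul0r.
move=> a ha; apply/negPn/negP => hg.
have := psumr_eq0P ge0 S0 (i:=a) isT.
rewrite /h /= ha (negbTE hg) /= subr0 mul1r => HL.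
by move: ha; rewrite thrE HL ltxx.
Qed.


Local Open Scope ring_scope.

Notation chowv n := ({ffun option 'I_n -> 'I_(2 ^ n).+1}).

Definition chow n (g : boolfun n) : chowv n :=
  [ffun o => inord (match o with
                    | None => #|[pred a | g a]|
                    | Some i => #|[pred a | g a && a i]| end)].

Lemma card_cube n : #|{: cube n}| = (2 ^ n)%N.
Proof. by rewrite card_ffun card_bool card_ord. Qed.

Lemma card_le_cube n (A : pred (cube n)) : (#|A| < (2 ^ n)%N.+1)%N.
Proof. by rewrite ltnS -(card_cube n) max_card. Qed.

Definition TH n (g : boolfun n) : bool := `[< exists b c, g = thr b c >].

Lemma chow_inj n (g1 g2 : boolfun n) : TH g1 -> TH g2 -> chow g1 = chow g2 -> g1 = g2.
Proof.
move=> /asboolP [b1 [c1 ->]] /asboolP [b2 [c2 ->]] E.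
have E0 : #|[pred a | thr b1 c1 a]| = #|[pred a | thr b2 c2 a]|.
  have := congr1 (fun v : chowv n => nat_of_ord (v None)) E; rewrite /= !ffunE.
  by rewrite !inordK ?card_le_cube.
have Ei : forall i, #|[pred a | thr b1 c1 a && a i]| = #|[pred a | thr b2 c2 a && a i]|.
  move=> i; have := congr1 (fun v : chowv n => nat_of_ord (v (Some i))) E; rewrite /= !ffunE.
  by rewrite !inordK ?card_le_cube.
apply/ffunP => a; apply/idP/idP.
  exact: thr_incl.
by apply: thr_incl => // i; rewrite Ei.
Qed.

Definition unchow n (v : chowv n) : boolfun n :=
  odflt [ffun=> false] [pick g | TH g && (chow g == v)].

Lemma unchowK n (g : boolfun n) : TH g -> unchow (chow g) = g.
Proof.
move=> Hg; rewrite /unchow; case: pickP => [g' /andP [Hg' /eqP E]|H] /=.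
  exact: chow_inj.
by have := H g; rewrite Hg eqxx.
Qed.

Notation code n p q := ({ffun 'I_p * 'I_q -> chowv n}).

Definition decode n p q (t : code n p q) : boolfun n :=
  [ffun a => [exists i : 'I_p, [forall j : 'I_q, unchow (t (i, j)) a]]].

Lemma rep_decode n (f : boolfun n) P N : NN_rep f P N ->
  exists t : code n (size (undup P)) (size (undup N)), f = decode t.
Proof.
move=> [disj H].
set P' := undup P; set N' := undup N.
exists [ffun ij : 'I_(size P') * 'I_(size N') => chow (thr (nth 0 P' ij.1) (nth 0 N' ij.2))].
apply/ffunP => a; rewrite ffunE.
have TT : forall b c : 'rV[R]_n, TH (thr b c) by move=> b c; apply/asboolP; exists b, c.
case: (H a) => H1 H2.
case fa: (f a).
  have [b bP bN] := H1 fa.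
  have bP' : b \in P' by rewrite mem_undup.
  apply/esym/existsP; have ib : (index b P' < size P')%N by rewrite index_mem.
  exists (Ordinal ib) => /=.
  apply/forallP => j; rewrite ffunE unchowK // ffunE /= nth_index //.
  apply: bN; rewrite -mem_undup; exact: mem_nth.
have [c cN cP] := H2 (negbT fa).
have cN' : c \in N' by rewrite mem_undup.
apply/esym/negbTE; rewrite negb_exists; apply/forallP => i; rewrite negb_forall.
have ic : (index c N' < size N')%N by rewrite index_mem.
apply/existsP; exists (Ordinal ic).
rewrite ffunE unchowK // ffunE /= nth_index // -leNgt; apply: ltW; apply: cP.
rewrite -mem_undup; exact: mem_nth.
Qed.

Local Close Scope ring_scope.


Lemma size_undup_le n (f : boolfun n) P N : NN_rep f P N ->
  size (undup P) + size (undup N) <= rep_size P N.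
Proof.
move=> [disj _]; rewrite /rep_size -size_cat; apply: uniq_leq_size.
  rewrite cat_uniq !undup_uniq /= andbT; apply/hasPn => x.
  rewrite !mem_undup => xN; apply/negP => xP; by move: (disj x xP); rewrite xN.
by move=> x; rewrite mem_undup !mem_cat !mem_undup.
Qed.

Definition Img n p q : {set boolfun n} := [set decode t | t : code n p q].

Lemma card_Img n p q : #|Img n p q| <= ((2 ^ n).+1 ^ n.+1) ^ (p * q).
Proof.
apply: (leq_trans (leq_imset_card _ _)).
by rewrite card_ffun card_prod !card_ord card_ffun card_option !card_ord.
Qed.

Lemma NN_rep_ex n (f : boolfun n) : exists P N, NN_rep f P N /\ rep_size P N = NN f.
Proof.
rewrite /NN; case: ex_minnP => m /asboolP H _; exact: H.
Qed.

Lemma bad_sub n (f : boolfun n) : 0 < n -> n ^ 2 * NN f ^ 2 <= 2 ^ n ->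
  f \in \bigcup_(pq : 'I_(2 ^ n).+1 * 'I_(2 ^ n).+1 | 4 * n ^ 2 * pq.1 * pq.2 <= 2 ^ n)
          Img n pq.1 pq.2.
Proof.
move=> n0 Hk; have [P [N [HR Hs]]] := NN_rep_ex f.
have Hle := size_undup_le HR; rewrite Hs in Hle.
have [t ->] := rep_decode HR.
set p := size (undup P) in Hle t *; set q := size (undup N) in Hle t *.
have k2 : NN f ^ 2 <= 2 ^ n.
  by apply: leq_trans Hk; rewrite leq_pmull // expn_gt0 n0.
have kle : NN f <= 2 ^ n.
  apply: leq_trans k2; rewrite expnS expn1; nia.
have hp : p < (2 ^ n).+1 by rewrite ltnS; apply: leq_trans kle; lia.
have hq : q < (2 ^ n).+1 by rewrite ltnS; apply: leq_trans kle; lia.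
apply/bigcupP; exists (Ordinal hp, Ordinal hq) => /=.
  have h4 : 4 * p * q <= NN f ^ 2.
    apply: (@leq_trans ((p + q) ^ 2)); first by rewrite -mulnA (nat_AGM2 p q).
    by rewrite leq_exp2r.
  apply: leq_trans Hk; apply: leq_trans (leq_mul (leqnn (n ^ 2)) h4).
  by nia.
by rewrite /Img; apply/imsetP; exists t.
Qed.


Lemma card_bigcup_le (I T : finType) (P : pred I) (F : I -> {set T}) :
  #|\bigcup_(i | P i) F i| <= \sum_(i | P i) #|F i|.
Proof.
apply: (big_ind2 (fun (U : {set T}) s => #|U| <= s)).
- by rewrite cards0.
- move=> U1 s1 U2 s2 h1 h2; apply: leq_trans (leq_card_setU U1 U2) _.
  exact: leq_add.
- by [].
Qed.

Lemma pow_big n : 7 <= n -> 9 * n + 6 <= 2 * 2 ^ n.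
Proof.
elim: n => [|n IH] //; rewrite leq_eqVlt => /orP [/eqP <- //|].
rewrite ltnS => h; have := IH h; rewrite expnS; lia.
Qed.

Lemma n_lt_pow n : n < 2 ^ n.
Proof. exact: ltn_expl. Qed.

Lemma leq_expn_base a b e : a <= b -> a ^ e <= b ^ e.
Proof. by move=> h; elim: e => [|e IH] //; rewrite !expnS leq_mul. Qed.

Lemma bad_card n : 7 <= n ->
  #|[set f : boolfun n | n ^ 2 * NN f ^ 2 <= 2 ^ n]| * n.+1 <= 2 ^ (2 ^ n).
Proof.
move=> n7; set T := 2 ^ n; set E := T %/ 3.
have n0 : 0 < n by lia.
have hsub : [set f : boolfun n | n ^ 2 * NN f ^ 2 <= T] \subset
   \bigcup_(pq : 'I_T.+1 * 'I_T.+1 | 4 * n ^ 2 * pq.1 * pq.2 <= T) Img n pq.1 pq.2.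
  by apply/fintype.subsetP => f; rewrite inE => hf; apply: bad_sub.
have hImg : forall pq : 'I_T.+1 * 'I_T.+1, 4 * n ^ 2 * pq.1 * pq.2 <= T ->
    #|Img n pq.1 pq.2| <= 2 ^ E.
  move=> [p q] /= hpq; apply: leq_trans (card_Img n p q) _.
  have h1 : (2 ^ n).+1 <= 2 ^ n.+1 by rewrite expnS; have := expn_gt0 2 n; lia.
  apply: (@leq_trans (((2 ^ n.+1) ^ n.+1) ^ (p * q))).
    by apply: leq_expn_base; apply: leq_expn_base.
  rewrite -!expnM; apply: leq_pexp2l => //.
  rewrite leq_divRL //.
  have h3 : 3 * (n.+1 * n.+1) <= 4 * (n * n) by nia.
  apply: leq_trans hpq.
  have -> : n.+1 * (n.+1 * (p * q)) * 3 = (3 * (n.+1 * n.+1)) * (p * q) by nia.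
  have -> : 4 * n ^ 2 * p * q = (4 * (n * n)) * (p * q) by nia.
  by apply: leq_mul.
have hcard : #|[set f : boolfun n | n ^ 2 * NN f ^ 2 <= T]| <= T.+1 * T.+1 * 2 ^ E.
  apply: leq_trans (subset_leq_card hsub) _.
  apply: leq_trans (card_bigcup_le _ _) _.
  apply: (@leq_trans (\sum_(pq : 'I_T.+1 * 'I_T.+1 | 4 * n ^ 2 * pq.1 * pq.2 <= T) 2 ^ E)); first exact: leq_sum.
  rewrite sum_nat_const leq_mul2r; apply/orP; right.
  by apply: leq_trans (max_card _) _; rewrite card_prod !card_ord.
have hE : E * 3 <= T by apply: leq_trunc_div.
have hET : E <= T by lia.
have hb := pow_big n7.
have hT : 3 * n + 2 <= T - E by rewrite /T; lia.
apply: leq_trans (leq_mul hcard (leqnn n.+1)) _.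
rewrite -[X in _ <= 2 ^ X](subnKC hET) expnD mulnAC mulnC.
rewrite leq_mul2l; apply/orP; right.
apply: (@leq_trans (2 ^ (3 * n + 2))); last by apply: leq_pexp2l.
have hn := n_lt_pow n.
have hT1 : T.+1 <= 2 * T by rewrite /T; have := expn_gt0 2 n; lia.
rewrite expnD mulnC expnM expnAC -/T.
have h2 : T.+1 * T.+1 <= (2 * T) * (2 * T) by apply: leq_mul.
apply: (@leq_trans (T * ((2 * T) * (2 * T)))); first by apply: leq_mul.
rewrite (_ : 2 ^ 2 = 4) // (_ : 3 = 1 + 1 + 1) // !expnD expn1; nia.
Qed.

Local Open Scope classical_set_scope.
Local Open Scope ring_scope.

Lemma small_NN n (k : nat) : (0 < n)%N ->
  ~~ ((Num.sqrt (2 : R)) ^+ n / n%:R < k%:R) -> (n ^ 2 * k ^ 2 <= 2 ^ n)%N.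
Proof.
move=> n0; rewrite -leNgt => hk.
have np : 0 < (n%:R : R) by rewrite ltr0n.
rewrite ler_pdivlMr // in hk.
have hk0 : 0 <= (k%:R * n%:R : R) by rewrite mulr_ge0.
have := ler_pM hk0 hk0 hk hk.
rewrite -exprMn -expr2 -[_ * Num.sqrt 2]expr2 sqr_sqrtr ?ler0n // -!natrM -!natrX ler_nat.
move=> h; apply: leq_trans h; rewrite mulnC -mulnn; nia.
Qed.

Lemma card_boolfun n : #|{: boolfun n}| = (2 ^ (2 ^ n))%N.
Proof. by rewrite card_ffun card_bool card_cube. Qed.

Lemma frac_bound n : (7 <= n)%N ->
  1 - harmonic n <=
  (#|[pred f : boolfun n | (Num.sqrt (2 : R)) ^+ n / n%:R < (NN f)%:R]|%:R
        / (#|{: boolfun n}|%:R : R)) <= 1.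
Proof.
move=> n7; set G := [pred f : boolfun n | _].
have n0 : (0 < n)%N by lia.
have hC : (#|[predC G]| <= #|[set f : boolfun n | (n ^ 2 * NN f ^ 2 <= 2 ^ n)%N]%SET|)%N.
  apply: subset_leq_card; apply/fintype.subsetP => f; rewrite !inE => hf.
  exact: small_NN.
have hb := leq_trans (leq_mul hC (leqnn n.+1)) (bad_card n7).
have hG := cardC G.
have tot0 : 0 < (#|{: boolfun n}|%:R : R).
  by rewrite ltr0n card_boolfun expn_gt0.
apply/andP; split; last first.
  by rewrite ler_pdivrMr // mul1r ler_nat -hG leq_addr.
rewrite -card_boolfun in hb.
rewrite ler_pdivlMr //= mulrBl mul1r.
have hx : 0 < (n.+1%:R : R) by rewrite ltr0n.
have key : (#|[predC G]|%:R : R) <= #|{: boolfun n}|%:R / n.+1%:R.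
  by rewrite ler_pdivlMr // -natrM ler_nat.
have hGR : (#|G|%:R : R) = #|{: boolfun n}|%:R - #|[predC G]|%:R.
  by rewrite -hG natrD addrK.
rewrite hGR mulrC lerB //.
Qed.

Theorem theorem5 :
  (fun n : nat =>
     (#|[pred f : boolfun n | (Num.sqrt (2 : R)) ^+ n / n%:R < (NN f)%:R]|%:R
        / (#|{: boolfun n}|%:R : R)))
  @ \oo --> (1 : R).
Proof.
apply: (@squeeze_cvgr _ _ _ _ (fun n => 1 - harmonic n) (fun _ => 1)).
- exists 7%N => // n /= hn; exact: frac_bound.
- have h1 : (fun _ : nat => 1 : R) @ \oo --> (1 : R) by exact: cvg_cst.
  have h2 : (@harmonic R) @ \oo --> (0 : R) by exact: cvg_harmonic.
  have := @cvgB R R^o nat _ _ (fun _ => 1) harmonic 1 0 h1 h2; rewrite subr0; apply; exact: eventually_filter.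
- exact: cvg_cst.
Qed.
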